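(* Let $1\le k\le N/2$ and $v\in E_k$. If $k=1$ and $\alpha\ge(N-1)/(N-2)$, then $t(v)<1$ and $v$ is linearly unstable. If $\alpha<(N-1)/(N-2)$, then $v$ is linearly unstable.
   Context: Let $N\ge3$, $\alpha>1$, and $A_{i,j}=1-\delta_{i,j}$ for $i,j\le N$. Let $\Delta=\{v\in\mathbb R_+^N:\sum_iv_i=1,\ v_i\le3/4\ \forall i\}$. For $v$ with nonnegative coordinates let $v^\alpha=(v_i^\alpha)_i$, $H(v)=\sum_{i\neq j}v_i^\alpha v_j^\alpha$, $\pi_i(v)=v_i^\alpha(Av^\alpha)_i/H(v)$, and on $\Delta$ let $F(v)=-v+\pi(v)$. An equilibrium is $v\in\Delta$ with $F(v)=0$. For $1\le k\le N/2$, $E_k$ denotes the set of equilibria $v$ with all coordinates positive, different from the center $(1/N,\dots,1/N)$, and such that $v_1=\dots=v_k$ and $v_{k+1}=\dots=v_N$. For $v\in E_k$, $t(v)=v_N/v_1$. With $DF(v)$ the differential at $v$ of $v\mapsto-v+\pi(v)$ acting on $\{x:\sum_ix_i=0\}$, an equilibrium is linearly unstable if some eigenvalue of $DF(v)$ has positive real part. *)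

(* Defs.v *)
From HB Require Import structures.
From mathcomp Require Import all_boot all_order all_algebra.
From mathcomp Require Import all_classical all_reals.
From mathcomp Require Import topology normedtype derive exp.
Set Implicit Arguments. Unset Strict Implicit. Unset Printing Implicit Defensive.
Import Order.TTheory GRing.Theory Num.Theory.
Import numFieldNormedType.Exports.
Local Open Scope ring_scope.

Section Defs.
Variable R : realType.
Variable N : nat.

(* Vectors of R^N are row vectors 'rV[R]_N; coordinate i (0-based) is v ord0 i.
   Paper index i (1..N) corresponds to the ordinal i-1. *)

(* the coordinate of v with 0-based index m (0 if m >= N) *)
Definition entry (v : 'rV[R]_N) (m : nat) : R :=
  \sum_(i < N | (i : nat) == m) v ord0 i.

Definition Amat : 'M[R]_N := \matrix_(i, j) (1 - (i == j)%:R).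

Definition powv (alpha : R) (v : 'rV[R]_N) : 'rV[R]_N :=
  \row_i (v ord0 i `^ alpha).

Definition Apow (alpha : R) (v : 'rV[R]_N) (i : 'I_N) : R :=
  \sum_j Amat i j * powv alpha v ord0 j.

Definition Hfun (alpha : R) (v : 'rV[R]_N) : R :=
  \sum_i \sum_(j | i != j) powv alpha v ord0 i * powv alpha v ord0 j.

Definition piv (alpha : R) (v : 'rV[R]_N) : 'rV[R]_N :=
  \row_i (powv alpha v ord0 i * Apow alpha v i / Hfun alpha v).

(* the map v |-> -v + pi(v) (F is its restriction to Delta) *)
Definition Ffun (alpha : R) (v : 'rV[R]_N) : 'rV[R]_N := - v + piv alpha v.

Definition Delta (v : 'rV[R]_N) : Prop :=
  (forall i, 0 <= v ord0 i) /\ \sum_i v ord0 i = 1 /\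
  (forall i, v ord0 i <= 3%:R / 4%:R).

Definition equilibrium (alpha : R) (v : 'rV[R]_N) : Prop :=
  Delta v /\ Ffun alpha v = 0.

Definition center : 'rV[R]_N := \row_(i < N) (N%:R)^-1.

Definition E_k (alpha : R) (k : nat) (v : 'rV[R]_N) : Prop :=
  equilibrium alpha v /\ (forall i, 0 < v ord0 i) /\ v <> center /\
  (forall i j : 'I_N, (i < k)%N -> (j < k)%N -> v ord0 i = v ord0 j) /\
  (forall i j : 'I_N, (k <= i)%N -> (k <= j)%N -> v ord0 i = v ord0 j).

Definition tv (v : 'rV[R]_N) : R := entry v N.-1 / entry v 0.

Definition tangent (x : 'rV[R]_N) : Prop := \sum_i x ord0 i = 0.

(* L (a real linear map, restricted to the invariant subspace S) has an
   eigenvalue lambda = a + i b with Re lambda = a > 0: there is a nonzero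
   complex eigenvector x + i y with x, y in S, i.e.
   L x = a x - b y and L y = b x + a y. *)
Definition has_eig_pos_re (L : 'rV[R]_N -> 'rV[R]_N)
    (S : 'rV[R]_N -> Prop) : Prop :=
  exists (a b : R) (x y : 'rV[R]_N),
    0 < a /\ S x /\ S y /\ (x <> 0 \/ y <> 0) /\
    L x = a *: x - b *: y /\ L y = b *: x + a *: y.

Definition lin_unstable (alpha : R) (v : 'rV[R]_N) : Prop :=
  has_eig_pos_re ('d (Ffun alpha) v) tangent.

End Defs.

(* Main.v *)
Require Import Defs.
From HB Require Import structures.
From mathcomp Require Import all_boot all_order all_algebra.
From mathcomp Require Import all_classical all_reals.
From mathcomp Require Import topology normedtype derive exp.
From mathcomp Require Import sequences realfun.
From mathcomp Require Import ring lra zify.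
Import Order.TTheory GRing.Theory Num.Theory.
Import numFieldNormedType.Exports.
Local Open Scope ring_scope.
Section P0.
Variable R : realType.

Lemma bern (s e : R) : 0 < s -> s != 1 -> 1 < e -> 1 + e * (s - 1) < s `^ e.
Proof.
move=> s0 s1 e1.
have L0 : ln s != 0.
  apply: contra s1 => /eqP L0; apply/eqP; by rewrite -(lnK s0) L0 expR0.
have hs : s `^ e = s * expR ((e - 1) * ln s).
  by rewrite /powR gt_eqF // -{2}(lnK s0) -expRD; congr expR; ring.
have h1 : 1 + (e - 1) * ln s < expR ((e - 1) * ln s).
  apply: expR_gt1Dx; rewrite mulf_neq0 // subr_eq0 gt_eqF //.
have h2 : - ln s <= s^-1 - 1.
  have := @le_ln1Dx R (s^-1 - 1).
  rewrite [1 + _]addrC subrK lnV ?posrE //; apply.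
  have si : 0 < s^-1 by rewrite invr_gt0.
  lra.
have h3 : s - 1 <= s * ln s.
  have : s * (- ln s) <= s * (s^-1 - 1) by rewrite ler_pM2l.
  by rewrite mulrBr divff ?gt_eqF // mulr1 mulrN; lra.
rewrite hs.
have : s * (1 + (e - 1) * ln s) < s * expR ((e - 1) * ln s) by rewrite ltr_pM2l.
have : (e - 1) * (s - 1) <= (e - 1) * (s * ln s) by rewrite ler_pM2l // subr_gt0.
nra.
Qed.
End P0.

Section P1.
Variable R : realType.

Lemma powR_div (c d g : R) : 0 < c -> 0 < d -> (d / c) `^ g = d `^ g / c `^ g.
Proof.
move=> c0 d0; rewrite powRM ?ltW ?invr_gt0 //; congr (_ * _).
rewrite /powR !gt_eqF ?invr_gt0 // lnV ?posrE // mulrN expRN //.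
Qed.

Lemma powRB1 (x p : R) : 0 < x -> x `^ p = x * x `^ (p - 1).
Proof.
move=> x0; have -> : x * x `^ (p - 1) = x `^ 1 * x `^ (p - 1) by rewrite powRr1 // ltW.
rewrite -powRD; first by rewrite addrC subrK.
by rewrite (gt_eqF x0) implybT.
Qed.

Lemma bern2 (x y e : R) : 0 < x -> 0 < y -> x != y -> 1 < e ->
  x `^ e + e * x `^ (e - 1) * (y - x) < y `^ e.
Proof.
move=> x0 y0 xy e1.
have ne1 : y / x != 1.
  by apply: contra xy => /eqP h; apply/eqP; move: h => /(congr1 (fun z => z * x)); rewrite divfK ?gt_eqF // mul1r.
have := @bern R (y / x) e (divr_gt0 y0 x0) ne1 e1.
rewrite powR_div // (@powRB1 x e x0) => h.
have x'0 : 0 < x `^ (e - 1) by apply: powR_gt0.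
set X := x `^ (e - 1).
have hx : 0 < x * X by apply: mulr_gt0.
rewrite ltr_pdivlMr // in h.
have -> : x * X + e * X * (y - x) = (1 + e * (y / x - 1)) * (x * X).
  by field; rewrite gt_eqF.
exact: h.
Qed.

Lemma within_crit (c d al S : R) : 0 < c -> c < d -> 1 < al ->
  c `^ (al - 1) * (S - c `^ al) = d `^ (al - 1) * (S - d `^ al) ->
  (2 * al - 1) * c `^ al < (al - 1) * S.
Proof.
move=> c0 cd al1 E.
have d0 : 0 < d by lra.
set b := al - 1.
have b0 : 0 < b by rewrite /b; lra.
set c' := c `^ b. set d' := d `^ b. set C := c `^ al. set D := d `^ al.
have c'0 : 0 < c' by apply: powR_gt0.
have C0 : 0 < C by apply: powR_gt0.
have d'0 : 0 < d' by apply: powR_gt0.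
have cd' : c' < d' by apply: gt0_ltr_powR => //; rewrite nnegrE ltW.
have e1 : 1 < (2 * b + 1) / b by rewrite ltr_pdivlMr //; lra.
have := @bern2 c' d' _ c'0 d'0 (negbT (lt_eqF cd')) e1.
have powe (z : R) : 0 < z -> (z `^ b) `^ ((2 * b + 1) / b) = z `^ b * z `^ al.
  move=> z0; rewrite -powRrM -powRD; last by rewrite (gt_eqF z0) implybT.
  have -> : b * ((2 * b + 1) / b) = b + al by rewrite /b; field; rewrite /b; lra.
  done.
have powe1 (z : R) : 0 < z -> (z `^ b) `^ ((2 * b + 1) / b - 1) = z `^ al.
  move=> z0; rewrite -powRrM.
  have -> : b * ((2 * b + 1) / b - 1) = al by rewrite /b; field; rewrite /b; lra.
  done.
rewrite powe // powe // powe1 // -/c' -/d' -/C -/D.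
have -> : (2 * b + 1) / b * C * (d' - c') = ((2 * b + 1) * C * (d' - c')) / b.
  by field; rewrite gt_eqF.
move=> H.
have H2 : b * (c' * C) + (2 * b + 1) * C * (d' - c') < b * (d' * D).
  have -> : b * (c' * C) + (2 * b + 1) * C * (d' - c') = b * (c' * C + (2 * b + 1) * C * (d' - c') / b).
    by field; rewrite gt_eqF.
  by rewrite ltr_pM2l.
rewrite ltNge; apply/negP => H3.
have e2 : 2 * al - 1 = 2 * b + 1 by rewrite /b; ring.
rewrite e2 in H3.
have H4 : b * S * (d' - c') <= (2 * b + 1) * C * (d' - c').
  rewrite ler_pM2r ?subr_gt0 //; lra.
have E' : S * (d' - c') = d' * D - c' * C.
  have : c' * (S - C) = d' * (S - D) by exact: E.
  nra.
have E'' : b * (S * (d' - c')) = b * (d' * D - c' * C) by rewrite E'.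
nra.
Qed.
End P1.

Section P2.
Variable R : realType.

Lemma k1_tlt (a b al m : R) : 0 < a -> 0 < b -> a != b -> 1 < al -> 1 < m ->
  m <= al * (m - 1) ->
  a `^ al + (m - 1) * b `^ al = m * a `^ (al - 1) * b -> b < a.
Proof.
move=> a0 b0 ab al1 m1 hm E.
rewrite ltNge le_eqVlt negb_or ab /=; apply/negP => lt_ab.
have := @bern2 R a b al a0 b0 ab al1.
rewrite (@powRB1 R a al a0) in E *.
have a'0 : 0 < a `^ (al - 1) by apply: powR_gt0.
set a' := a `^ (al - 1) in E *; set B := b `^ al in E *.
move=> H.
have H1 : (m - 1) * (a * a' + al * a' * (b - a)) < (m - 1) * B by rewrite ltr_pM2l // subr_gt0.
have H2 : m * a' * (b - a) <= (m - 1) * (al * a' * (b - a)).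
  have -> : (m - 1) * (al * a' * (b - a)) = (al * (m - 1)) * (a' * (b - a)) by ring.
  have -> : m * a' * (b - a) = m * (a' * (b - a)) by ring.
  by rewrite ler_pM2r // mulr_gt0 // subr_gt0.
nra.
Qed.

Lemma k1_between (a b al m : R) : 0 < a -> a < b -> 1 < al -> 1 < m ->
  a `^ al + (m - 1) * b `^ al = m * a `^ (al - 1) * b ->
  a `^ al < (al - 1) * (m - 1) * b `^ al.
Proof.
move=> a0 ab al1 m1 E.
have b0 : 0 < b by lra.
have := @bern2 R b a al b0 a0 (negbT (gt_eqF ab)) al1.
rewrite (@powRB1 R a al a0) (@powRB1 R b al b0) in E *.
have a'0 : 0 < a `^ (al - 1) by apply: powR_gt0.
have b'0 : 0 < b `^ (al - 1) by apply: powR_gt0.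
set a' := a `^ (al - 1) in E *; set b' := b `^ (al - 1) in E *.
move=> H.
set X := (m - 1) * al * b' - m * a'.
have HX : X * (b - a) = (m - 1) * (a * a' - b * b' - al * b' * (a - b)).
  rewrite /X; nra.
have HX2 : 0 < X * (b - a) by rewrite HX mulr_gt0 // ?subr_gt0 //; lra.
have X0 : 0 < X by move: HX2; rewrite pmulr_lgt0 // subr_gt0.
have : 0 < X * b by rewrite mulr_gt0.
rewrite /X; nra.
Qed.
End P2.

Section P3.
Variable R : realType.
Variable N : nat.
Variable al : R.
Implicit Types v x w : 'rV[R]_N.

Lemma diff_sumf n (f : 'I_n -> 'rV[R]_N -> R) v :
  (forall i, differentiable (f i) v) -> differentiable (fun w => \sum_i f i w) v.
Proof.
move=> H; have -> : (fun w => \sum_i f i w) = \sum_i f i by rewrite fct_sumE.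
exact: differentiable_sum.
Qed.

Lemma diff_coord_pow j v : 0 < v ord0 j ->
  differentiable (fun w : 'rV[R]_N => w ord0 j `^ al) v.
Proof.
move=> vj.
have -> : (fun w : 'rV[R]_N => w ord0 j `^ al) = (fun y : R => y `^ al) \o (fun w : 'rV[R]_N => w ord0 j) by [].
apply: differentiable_comp; first exact: differentiable_coord.
apply/derivable1_diffP; apply: derivable_powR; by rewrite in_itv /= andbT.
Qed.

Lemma diff_row M (f : 'rV[R]_N -> 'rV[R]_M) v :
  (forall j, differentiable (fun w => f w ord0 j) v) -> differentiable f v.
Proof.
move=> H.
have -> : f = \sum_(j < M) (fun w => f w ord0 j *: (delta_mx ord0 j : 'rV[R]_M)).
  apply/funext => w; rewrite fct_sumE /=; apply/rowP => j.
  rewrite summxE (bigD1 j) //= !mxE eqxx mulr1 big1 ?addr0 // => k kj.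
  by rewrite !mxE eqxx /= eq_sym (negbTE kj) mulr0.
apply: differentiable_sum => j; apply: differentiableZl; exact: H.
Qed.

Lemma HfunE w : Hfun al w =
  \sum_(i < N) \sum_(j < N) (if i != j then w ord0 i `^ al * w ord0 j `^ al else 0).
Proof.
rewrite /Hfun; apply: eq_bigr => i _; rewrite big_mkcond; apply: eq_bigr => j _.
by rewrite !mxE.
Qed.

Lemma ApowE w i : Apow al w i = \sum_(j < N) (1 - (i == j)%:R) * w ord0 j `^ al.
Proof. by rewrite /Apow; apply: eq_bigr => j _; rewrite !mxE. Qed.

Lemma FfunE w i : Ffun al w ord0 i =
  - w ord0 i + w ord0 i `^ al * Apow al w i * (Hfun al w)^-1.
Proof. by rewrite /Ffun !mxE. Qed.

Lemma diff_H v : (forall i, 0 < v ord0 i) -> differentiable (Hfun al) v.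
Proof.
move=> vp.
have -> : Hfun al = fun w => \sum_(i < N) \sum_(j < N)
    (if i != j then w ord0 i `^ al * w ord0 j `^ al else 0).
  by apply/funext => w; rewrite HfunE.
apply: diff_sumf => i; apply: diff_sumf => j; case: (i != j).
  by apply: differentiableM; apply: diff_coord_pow.
exact: differentiable_cst.
Qed.

Lemma diff_Apow v i : (forall i, 0 < v ord0 i) ->
  differentiable (fun w => Apow al w i) v.
Proof.
move=> vp.
have -> : (fun w => Apow al w i) = fun w => \sum_(j < N) (1 - (i == j)%:R) * w ord0 j `^ al.
  by apply/funext => w; rewrite ApowE.
apply: diff_sumf => j; apply: differentiableM; first exact: differentiable_cst.
exact: diff_coord_pow.
Qed.

Lemma diff_F v : (forall i, 0 < v ord0 i) -> Hfun al v != 0 ->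
  differentiable (Ffun al) v.
Proof.
move=> vp H0; apply: diff_row => j.
have -> : (fun w => Ffun al w ord0 j) = fun w =>
   - w ord0 j + w ord0 j `^ al * Apow al w j * (Hfun al w)^-1.
  by apply/funext => w; rewrite FfunE.
apply: differentiableD.
  apply: differentiableN; exact: differentiable_coord.
apply: differentiableM; first apply: differentiableM.
- exact: diff_coord_pow.
- exact: diff_Apow.
- apply: differentiableV => //; exact: diff_H.
Qed.

End P3.

Section P4.
Variable R : realType.
Variable N : nat.
Variable al : R.
Variables (v x : 'rV[R]_N).

Lemma isdM (f g : 'rV[R]_N -> R) df dg : is_derive v x f df -> is_derive v x g dg ->
  is_derive v x (fun w => f w * g w) (f v * dg + g v * df).
Proof. move=> hf hg; exact: (is_deriveM hf hg). Qed.

Lemma isdD (f g : 'rV[R]_N -> R) df dg : is_derive v x f df -> is_derive v x g dg ->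
  is_derive v x (fun w => f w + g w) (df + dg).
Proof. move=> hf hg; exact: (is_deriveD hf hg). Qed.

Lemma isdN (f : 'rV[R]_N -> R) df : is_derive v x f df ->
  is_derive v x (fun w => - f w) (- df).
Proof. move=> hf; exact: (is_deriveN hf). Qed.

Lemma isdV (f : 'rV[R]_N -> R) df : f v != 0 -> is_derive v x f df ->
  is_derive v x (fun w => (f w)^-1) (- (f v) ^- 2 * df).
Proof.
move=> f0 hf; apply: DeriveDef.
  by apply: derivableV => //; case: hf.
rewrite deriveV //.
by case: hf => _ ->.
Qed.

Lemma isdcst (c : R) : is_derive v x (fun _ : 'rV[R]_N => c) 0.
Proof. exact: is_derive_cst. Qed.

Lemma isdsum n (f : 'I_n -> 'rV[R]_N -> R) df :
  (forall i, is_derive v x (f i) (df i)) ->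
  is_derive v x (fun w => \sum_i f i w) (\sum_i df i).
Proof.
move=> H; have -> : (fun w => \sum_i f i w) = \sum_i f i by rewrite fct_sumE.
exact: is_derive_sum.
Qed.

Lemma isd_coord j : is_derive v x (fun w : 'rV[R]_N => w ord0 j) (x ord0 j).
Proof.
apply: DeriveDef.
  by move/derivable_mxP : (@derivable_id R _ v x); apply.
have := derive_mx (@derivable_id R _ v x); rewrite derive_id => /matrixP/(_ ord0 j).
by rewrite mxE.
Qed.

Lemma isd_pow j : 0 < v ord0 j ->
  is_derive v x (fun w : 'rV[R]_N => w ord0 j `^ al) (al * v ord0 j `^ (al - 1) * x ord0 j).
Proof.
move=> vj; apply: DeriveDef.
  by apply: diff_derivable; apply: diff_coord_pow.
rewrite deriveE; last by apply: diff_coord_pow.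
have -> : (fun w : 'rV[R]_N => w ord0 j `^ al) = (fun y : R => y `^ al) \o (fun w : 'rV[R]_N => w ord0 j) by [].
have dg : derivable (fun y : R => y `^ al) (v ord0 j) 1.
  by apply: derivable_powR; rewrite in_itv /= andbT.
have dc : differentiable (fun w : 'rV[R]_N => w ord0 j) v by exact: differentiable_coord.
have dg' : differentiable (fun y : R => y `^ al) (v ord0 j) by apply/derivable1_diffP.
rewrite (diff_comp dc dg').
have ex : 'd (fun w : 'rV[R]_N => w ord0 j) v x = x ord0 j.
  by rewrite -deriveE //; case: (isd_coord j).
rewrite /= ex deriv1E //=.
rewrite powR_derive1 ?in_itv /= ?andbT //.
exact: (mulrC (x ord0 j) _).
Qed.

End P4.

Section P5.
Variable R : realType.
Variable N : nat.
Variable al : R.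

Definition dwf (v x : 'rV[R]_N) j := al * v ord0 j `^ (al - 1) * x ord0 j.
Definition dAp (v x : 'rV[R]_N) i := \sum_(j < N) (1 - (i == j)%:R) * dwf v x j.
Definition dHf (v x : 'rV[R]_N) := \sum_(i < N) \sum_(j < N)
  (if i != j then v ord0 i `^ al * dwf v x j + v ord0 j `^ al * dwf v x i else 0).
Definition DFc (v x : 'rV[R]_N) i := - x ord0 i +
  ((v ord0 i `^ al * dAp v x i + Apow al v i * dwf v x i) * (Hfun al v)^-1
   + (v ord0 i `^ al * Apow al v i) * (- (Hfun al v) ^- 2 * dHf v x)).

Variables (v x : 'rV[R]_N).
Hypothesis vp : forall i, 0 < v ord0 i.
Hypothesis H0 : Hfun al v != 0.

Lemma isd_F i : is_derive v x (fun w => Ffun al w ord0 i) (DFc v x i).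
Proof.
have -> : (fun w => Ffun al w ord0 i) = fun w => - w ord0 i +
   w ord0 i `^ al * (\sum_(j < N) (1 - (i == j)%:R) * w ord0 j `^ al) *
   (\sum_(i0 < N) \sum_(j < N) (if i0 != j then w ord0 i0 `^ al * w ord0 j `^ al else 0))^-1.
  by apply/funext => w; rewrite FfunE ApowE HfunE.
have hP j := @isd_pow R N al v x j (vp j).
have hA := @isdsum R N v x _ _ _ (fun j => @isdM R N v x _ _ _ _ (@isdcst R N v x (1 - (i == j)%:R)) (hP j)).
have hH : is_derive v x
   (fun w => \sum_(i0 < N) \sum_(j < N) (if i0 != j then w ord0 i0 `^ al * w ord0 j `^ al else 0))
   (dHf v x).
  have hij : forall i0 j : 'I_N, is_derive v x
     (fun w => if i0 != j then w ord0 i0 `^ al * w ord0 j `^ al else 0)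
     (if i0 != j then v ord0 i0 `^ al * dwf v x j + v ord0 j `^ al * dwf v x i0 else 0).
    move=> i0 j; case: (i0 != j) => /=; last exact: isdcst.
    have := (@isdM R N v x _ _ _ _ (hP i0) (hP j)).
    rewrite /dwf.
    by move=> h; exact: h.
  by apply: isdsum => i0; apply: isdsum => j; exact: hij.
have H0' : (\sum_(i0 < N) \sum_(j < N) (if i0 != j then v ord0 i0 `^ al * v ord0 j `^ al else 0)) != 0.
  by rewrite -HfunE.
have hPA := @isdM R N v x _ _ _ _ (hP i) hA.
have hHinv := @isdV R N v x _ _ H0' hH.
have hM := @isdM R N v x _ _ _ _ hPA hHinv.
have hC := @isdN R N v x _ _ (@isd_coord R N v x i).
have hT := @isdD R N v x _ _ _ _ hC hM.
have h := is_derive_eq hT (df := DFc v x i).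
apply: h.
rewrite /DFc -ApowE -HfunE.
have -> : (\sum_(j < N) ((1 - (i == j)%:R) * dwf v x j + v ord0 j `^ al * 0)) = dAp v x i.
  by apply: eq_bigr => j _; rewrite /dwf; ring.
rewrite /dwf; ring.
Qed.

Lemma dF : 'd (Ffun al) v x = \row_i DFc v x i.
Proof.
have dFv := @diff_F R N al v vp H0.
rewrite -deriveE //.
rewrite derive_mx; last exact: diff_derivable.
apply/rowP => i; rewrite !mxE.
by case: (isd_F i) => _ ->.
Qed.

End P5.

Section P6.
Variable R : realType.
Variable N : nat.

Lemma sumA (f : 'I_N -> R) i : \sum_(j < N) (1 - (i == j)%:R) * f j = \sum_(j < N) f j - f i.
Proof.
rewrite (bigD1 i) //= [in RHS](bigD1 i) //= eqxx subrr mul0r add0r.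
rewrite addrAC subrr add0r; apply: eq_bigr => j ji.
by rewrite eq_sym (negbTE ji) subr0 mul1r.
Qed.

Lemma sumH (f g : 'I_N -> R) :
  \sum_(i < N) \sum_(j < N) (if i != j then f i * g j else 0) =
  (\sum_(i < N) f i) * (\sum_(j < N) g j) - \sum_(i < N) f i * g i.
Proof.
rewrite mulr_suml -sumrB; apply: eq_bigr => i _.
rewrite mulr_sumr (bigD1 i) //= eqxx [in RHS](bigD1 i) //= addrAC subrr add0r.
by rewrite add0r; apply: eq_bigr => j ji; rewrite eq_sym ji.
Qed.

Lemma sumH2 (f g : 'I_N -> R) :
  \sum_(i < N) \sum_(j < N) (if i != j then f j * g i else 0) =
  (\sum_(i < N) f i) * (\sum_(j < N) g j) - \sum_(i < N) f i * g i.
Proof.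
transitivity (\sum_(i < N) \sum_(j < N) (if i != j then g i * f j else 0)).
  by apply: eq_bigr => i _; apply: eq_bigr => j _; rewrite mulrC.
rewrite sumH mulrC; congr (_ - _); apply: eq_bigr => i _; exact: mulrC.
Qed.

Lemma sumIf (f g : 'I_N -> 'I_N -> R) :
  \sum_(i < N) \sum_(j < N) (if i != j then f i j + g i j else 0) =
  \sum_(i < N) \sum_(j < N) (if i != j then f i j else 0) +
  \sum_(i < N) \sum_(j < N) (if i != j then g i j else 0).
Proof.
symmetry; rewrite -big_split; apply: eq_bigr => i _ /=; rewrite -big_split; apply: eq_bigr => j _ /=.
by case: (i != j); rewrite ?addr0.
Qed.

Variable al : R.
Local Notation dw := (@dwf R N al).
Local Notation dAp := (@dAp R N al).
Local Notation dHf := (@dHf R N al).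
Local Notation DFc := (@DFc R N al).
Variables (v x : 'rV[R]_N).
Let w j := v ord0 j `^ al.
Let S := \sum_(j < N) w j.
Let dS := \sum_(j < N) dw v x j.
Let Q := \sum_(j < N) w j * dw v x j.
Let H := S ^+ 2 - \sum_(j < N) w j ^+ 2.

Lemma ApowS i : Apow al v i = S - w i.
Proof. by rewrite ApowE sumA. Qed.

Lemma HfunS : Hfun al v = H.
Proof. by rewrite HfunE sumH /H /S expr2; congr (_ - _); apply: eq_bigr => j _; rewrite expr2. Qed.

Lemma dApS i : dAp v x i = dS - dw v x i.
Proof. by rewrite /dAp sumA. Qed.

Lemma dHS : dHf v x = 2 * (S * dS - Q).
Proof.
rewrite /dHf sumIf sumH sumH2 /S /dS /Q /w; ring.
Qed.

Lemma DFcS i : DFc v x i = - x ord0 i +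
  ((w i * (dS - dw v x i) + (S - w i) * dw v x i) / H
   + (w i * (S - w i)) * (- H ^- 2 * (2 * (S * dS - Q)))).
Proof. by rewrite /DFc dApS dHS ApowS HfunS. Qed.

End P6.

Section P7.
Variable R : realType.

Lemma derive_E (a b a' b' m : R) : 0 < a -> 0 < b -> 0 < b' -> 1 < m ->
  a * ((a * a' + m * (b * b')) ^+ 2 - ((a * a') ^+ 2 + m * (b * b') ^+ 2)) =
     (a * a') * (m * (b * b')) ->
  a + m * b = 1 ->
  a * a' + (m - 1) * (b * b') = m * a' * b.
Proof.
move=> a0 b0 b'0 m1 Eq0 s1.
set A := a * a' in Eq0 *; set B := b * b' in Eq0 *.
have B0 : 0 < B by rewrite mulr_gt0.
have mB : 0 < m * B by rewrite mulr_gt0 //; lra.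
have E1 : a * (2 * A + (m - 1) * B) = A.
  apply: (mulIf (lt0r_neq0 mB)); rewrite -Eq0; ring.
have E2 : a * (2 * A + (m - 1) * B) = A * (a + m * b) by rewrite s1 mulr1.
have E3 : a * (A + (m - 1) * B) = a * (m * a' * b).
  move: E2; rewrite /A; move=> E2; nra.
exact: (mulfI (lt0r_neq0 a0)).
Qed.

Definition Dexp (xi wi dwi S dS Q H : R) := - xi +
  ((wi * (dS - dwi) + (S - wi) * dwi) / H + (wi * (S - wi)) * (- H ^- 2 * (2 * (S * dS - Q)))).

Lemma between_real (a b a' b' m al : R) : 0 < a -> 0 < b -> 0 < a' -> 0 < b' ->
  1 < al -> 1 < m ->
  let A := a * a' in let B := b * b' in let S := A + m * B in
  let H := S ^+ 2 - (A ^+ 2 + m * B ^+ 2) in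
  a * H = A * (S - A) ->
  A + (m - 1) * B = m * a' * b ->
  A < (al - 1) * (m - 1) * B ->
  let dw0 := al * a' * m in let dw1 := al * b' * (-1) in
  let dS := dw0 + m * dw1 in let Q := A * dw0 + m * (B * dw1) in
  let c1 := 1 + ((B * (dS - dw1) + (S - B) * dw1) / H
                 + (B * (S - B)) * (- H ^- 2 * (2 * (S * dS - Q)))) in
  let c0 := - m + ((A * (dS - dw0) + (S - A) * dw0) / H
                 + (A * (S - A)) * (- H ^- 2 * (2 * (S * dS - Q)))) in
  Dexp m A dw0 S dS Q H = (- Dexp (-1) B dw1 S dS Q H) * m /\ 0 < - Dexp (-1) B dw1 S dS Q H.
Proof.
move=> a0 b0 a'0 b'0 al1 m1 A B S H Eq0 E Bw dw0 dw1 dS Q c1 c0.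
have -> : Dexp (-1) B dw1 S dS Q H = c1 by rewrite /Dexp opprK.
have -> : Dexp m A dw0 S dS Q H = c0 by [].
have A0 : 0 < A by rewrite mulr_gt0.
have B0 : 0 < B by rewrite mulr_gt0.
have HE : H = 2 * m * A * B + m * (m - 1) * B ^+ 2 by rewrite /H /S; ring.
have H0 : 0 < H.
  rewrite HE; apply: addr_gt0; first by rewrite !mulr_gt0 //; lra.
  by rewrite !mulr_gt0 ?exprn_gt0 //; lra.
have Hn0 : H != 0 by rewrite gt_eqF.
split.
  rewrite /c0 /c1 /dS /Q /dw0 /dw1 /S.
  rewrite HE; rewrite HE in Hn0.
  clearbody c0 c1 Q dS dw0 dw1 H S A B.
  by field.
have SQ : S * dS - Q = 0.
  have h1 : b * (S * dS - Q) = al * m * B * (m * a' * b - A - (m - 1) * B).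
    rewrite /S /dS /Q /dw0 /dw1 /B; ring.
  have h2 : m * a' * b - A - (m - 1) * B = 0 by rewrite -E; ring.
  rewrite h2 mulr0 in h1; move/eqP: h1; rewrite mulf_eq0 gt_eqF //= => /eqP //.
rewrite /c1 SQ !mulr0 addr0.
have K : - (B * (dS - dw1) + (S - B) * dw1) = al * (A * b' + 2 * (m - 1) * B * b' - m * B * a').
  rewrite /dS /dw0 /dw1 /S; ring.
have Kb : b * (al * (A * b' + 2 * (m - 1) * B * b' - m * B * a')) = al * (m - 1) * B ^+ 2.
  have -> : b * (al * (A * b' + 2 * (m - 1) * B * b' - m * B * a'))
    = al * B * (A + 2 * (m - 1) * B - m * a' * b) by rewrite /B; ring.
  rewrite -E; ring.
have aH : a * H = A * m * B by rewrite Eq0 /S; ring.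
have hA : A = a * a' by [].
have hB : B = b * b' by [].
clearbody c1 c0 Q dS dw0 dw1 H S A B.
have goal : H < al * (A * b' + 2 * (m - 1) * B * b' - m * B * a').
  rewrite -(ltr_pM2l b0) Kb -(ltr_pM2l a0).
  have -> : a * (b * H) = b * A * m * B by rewrite mulrCA aH; ring.
  have -> : b * A * m * B = (m * a' * b) * (a * B) by rewrite hA; ring.
  rewrite -E.
  have ab0 : 0 < a * B by rewrite mulr_gt0.
  have -> : a * (al * (m - 1) * B ^+ 2) = al * (m - 1) * B * (a * B) by ring.
  rewrite ltr_pM2r //; lra.
have : 1 < al * (A * b' + 2 * (m - 1) * B * b' - m * B * a') / H.
  by rewrite ltr_pdivlMr // mul1r.
rewrite -K; set Z := B * (dS - dw1) + (S - B) * dw1.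
have -> : - Z / H = - (Z / H) by rewrite mulNr.
lra.
Qed.
End P7.

Section P8.
Variable R : realType.
Variable N : nat.
Variable al : R.
Variable v : 'rV[R]_N.
Hypothesis vp : forall i, 0 < v ord0 i.
Hypothesis Fv : Ffun al v = 0.
Hypothesis al1 : 1 < al.

Local Notation w j := (v ord0 j `^ al).
Local Notation S := (\sum_(j < N) v ord0 j `^ al).

Lemma Hge0 : 0 <= Hfun al v.
Proof.
rewrite HfunE; apply: sumr_ge0 => i _; apply: sumr_ge0 => j _.
by case: (i != j) => //; rewrite mulr_ge0 // powR_ge0.
Qed.

Lemma Fi i : v ord0 i * Hfun al v = w i * (S - w i).
Proof.
have := congr1 (fun M : 'rV[R]_N => M ord0 i) Fv; rewrite FfunE mxE ApowS /=.
have [H0|Hn0] := eqVneq (Hfun al v) 0.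
  rewrite H0 invr0 mulr0 addr0 => /eqP; rewrite oppr_eq0 => /eqP vi0.
  by have := vp i; rewrite vi0 ltxx.
move=> h; apply/eqP; rewrite -subr_eq0.
have -> : v ord0 i * Hfun al v - w i * (S - w i) = - ((- v ord0 i + w i * (S - w i) * (Hfun al v)^-1) * Hfun al v).
  by field.
by rewrite h mul0r oppr0.
Qed.

Lemma Hpos (i0 : 'I_N) : 0 < Hfun al v.
Proof.
rewrite lt_def Hge0 andbT; apply/eqP => H0.
have := Fi i0; rewrite H0 mulr0.
have := congr1 (fun M : 'rV[R]_N => M ord0 i0) Fv; rewrite FfunE mxE H0 invr0 mulr0 addr0.
move=> /eqP; rewrite oppr_eq0 => /eqP vi0.
by have := vp i0; rewrite vi0 ltxx.
Qed.

Lemma eqi i : Hfun al v = v ord0 i `^ (al - 1) * (S - w i).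
Proof.
apply: (mulfI (lt0r_neq0 (vp i))); rewrite Fi.
rewrite {1}(@powRB1 R _ al (vp i)); ring.
Qed.

Local Notation dw := (@dwf R N al).
Local Notation DFc := (@DFc R N al).

Lemma within_eig (c : R) (x : 'rV[R]_N) (i0 : 'I_N) : 0 < c -> tangent x ->
  (forall j, x ord0 j != 0 -> v ord0 j = c) ->
  'd (Ffun al) v x = (-1 + al * c `^ (al - 1) * (S - 2 * c `^ al) / Hfun al v) *: x.
Proof.
move=> c0 tx sx.
have Hn0 : Hfun al v != 0 by rewrite gt_eqF // (Hpos i0).
rewrite (@dF R N al v x vp Hn0).
have hdw j : dw v x j = al * c `^ (al - 1) * x ord0 j.
  by rewrite /dwf; have [->|/sx ->] := eqVneq (x ord0 j) 0; rewrite ?mulr0.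
have hwx j : w j * x ord0 j = c `^ al * x ord0 j.
  by have [->|/sx ->] := eqVneq (x ord0 j) 0; rewrite ?mulr0.
have dS0 : \sum_(j < N) dw v x j = 0.
  rewrite (eq_bigr _ (fun j _ => hdw j)) -mulr_sumr.
  by rewrite tx mulr0.
have Q0 : \sum_(j < N) w j * dw v x j = 0.
  transitivity (\sum_(j < N) (al * c `^ (al - 1) * c `^ al) * x ord0 j).
    apply: eq_bigr => j _; rewrite hdw mulrCA hwx; ring.
  by rewrite -mulr_sumr tx mulr0.
have HS : (\sum_(j < N) v ord0 j `^ al) ^+ 2 - \sum_(j < N) v ord0 j `^ al ^+ 2 = Hfun al v.
  by rewrite (HfunS R N al v).
apply/rowP => i; rewrite !mxE DFcS /= dS0 Q0 HS hdw.
change (x 0 i) with (x ord0 i).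
have [->|/sx ->] := eqVneq (x ord0 i) 0; ring.
Qed.

Lemma sum_delta (p0 : 'I_N) : \sum_(i < N) (delta_mx ord0 p0 : 'rV[R]_N) ord0 i = 1.
Proof.
rewrite (bigD1 p0) //= mxE !eqxx /= big1 ?addr0 // => i ip.
by rewrite mxE /= (negbTE ip). Show.
Qed.

Lemma eig_fin (L : 'rV[R]_N -> 'rV[R]_N) (l : R) (x : 'rV[R]_N) : L 0 = 0 ->
  0 < l -> tangent x -> x != 0 -> L x = l *: x -> has_eig_pos_re L (@tangent R N).
Proof.
move=> L0 l0 tx xn0 Lx; exists l, 0, x, 0; split => //; split => //; split.
  by rewrite /tangent; apply: big1 => i _; rewrite mxE.
split; first by left; apply/eqP.
by rewrite Lx scale0r subr0 L0 scale0r scaler0 addr0.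
Qed.

Lemma within_unstable (p q r : 'I_N) : p != q -> v ord0 p = v ord0 q ->
  v ord0 p < v ord0 r -> lin_unstable al v.
Proof.
move=> pq epq ltr.
set c := v ord0 p in epq ltr *.
have c0 : 0 < c := vp p.
set x : 'rV[R]_N := delta_mx ord0 p - delta_mx ord0 q.
have tx : tangent x.
  rewrite /tangent (eq_bigr (fun i => (delta_mx ord0 p : 'rV[R]_N) ord0 i - (delta_mx ord0 q : 'rV[R]_N) ord0 i)); last by move=> i _; rewrite /x !mxE.
  by rewrite sumrB !sum_delta subrr.
have xn0 : x != 0.
  apply/negP => /eqP x0; have := congr1 (fun M : 'rV[R]_N => M ord0 p) x0.
  rewrite !mxE !eqxx /= (negbTE pq) subr0 => /eqP; rewrite oner_eq0.
  done.
have sx : forall j, x ord0 j != 0 -> v ord0 j = c.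
  move=> j; rewrite /x !mxE /=.
  have [->|jp] := eqVneq j p; first by [].
  have [->|jq] := eqVneq j q; first by rewrite epq.
  by rewrite subrr eqxx.
have eig := @within_eig c x p c0 tx sx.
rewrite /lin_unstable; apply: (@eig_fin _ _ _ (linear0 _) _ tx xn0 eig).
have Hp := eqi p; have Hr := eqi r.
have crit := @within_crit R _ _ _ _ c0 ltr al1 (etrans (esym Hp) Hr).
have c'0 : 0 < c `^ (al - 1) by apply: powR_gt0.
have H0 := Hpos p.
have SC : 0 < \sum_(j < N) v ord0 j `^ al - c `^ al.
  by move: H0; rewrite Hp pmulr_rgt0.
have : 1 < al * c `^ (al - 1) * (\sum_(j < N) v ord0 j `^ al - 2 * c `^ al) / Hfun al v.
  rewrite ltr_pdivlMr // mul1r Hp.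
  have -> : al * c `^ (al - 1) * (\sum_(j < N) v ord0 j `^ al - 2 * c `^ al) =
    c `^ (al - 1) * (al * (\sum_(j < N) v ord0 j `^ al - 2 * c `^ al)) by ring.
  rewrite ltr_pM2l //; nra.
lra.
Qed.

End P8.

Section P9.
Variable R : realType.
Variable N : nat.
Variable al : R.
Variable v : 'rV[R]_N.
Hypothesis vp : forall i, 0 < v ord0 i.
Hypothesis Fv : Ffun al v = 0.
Hypothesis al1 : 1 < al.
Local Notation dw := (@dwf R N al).

Lemma sum_k1 (i0 : 'I_N) (F : 'I_N -> R) (F1 : R) :
  (forall j, j != i0 -> F j = F1) -> \sum_(j < N) F j = F i0 + (N%:R - 1) * F1.
Proof.
move=> hF; rewrite (bigD1 i0) //=; congr (_ + _).
rewrite (eq_bigr (fun _ => F1)); last by move=> j /hF.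
have hc : \sum_(j < N) F1 = F1 + \sum_(j < N | j != i0) F1 by rewrite (bigD1 i0).
have : \sum_(j < N) F1 = N%:R * F1 by rewrite sumr_const card_ord mulr_natl.
rewrite hc => h.
have -> : \sum_(j < N | j != i0) F1 = N%:R * F1 - F1 by rewrite -h; ring.
ring.
Qed.

Lemma between_unstable (i0 : 'I_N) (b : R) : (2 < N)%N ->
  \sum_(j < N) v ord0 j = 1 ->
  (forall j, j != i0 -> v ord0 j = b) -> v ord0 i0 < b -> lin_unstable al v.
Proof.
move=> N2 s1 hb ab.
set a := v ord0 i0 in ab.
set m : R := N%:R - 1.
have m1 : 1 < m by rewrite /m ltrBrDl (_ : 1 + 1 = 2%:R) // ltr_nat.
have a0 : 0 < a := vp i0.
have b0 : 0 < b by apply: lt_trans ab.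
have a'0 : 0 < a `^ (al - 1) by apply: powR_gt0.
have b'0 : 0 < b `^ (al - 1) by apply: powR_gt0.
have hA : a `^ al = a * a `^ (al - 1) by apply: powRB1.
have hB : b `^ al = b * b `^ (al - 1) by apply: powRB1.
have hS : \sum_(j < N) v ord0 j `^ al = a `^ al + m * b `^ al.
  by apply: sum_k1 => j /hb ->.
have hS2 : \sum_(j < N) v ord0 j `^ al ^+ 2 = (a `^ al) ^+ 2 + m * (b `^ al) ^+ 2.
  by apply: sum_k1 => j /hb ->.
have hsum : a + m * b = 1 by rewrite -s1 (@sum_k1 i0 _ b).
have hH : Hfun al v = (a `^ al + m * b `^ al) ^+ 2 - ((a `^ al) ^+ 2 + m * (b `^ al) ^+ 2).
  by rewrite (HfunS R N al v) /= hS hS2.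
have Eq0 : a * Hfun al v = a `^ al * (a `^ al + m * b `^ al - a `^ al).
  by rewrite (@Fi R N al v vp Fv i0) /= hS.
rewrite hH hA hB in Eq0.
have Eq0' : a * ((a * a `^ (al - 1) + m * (b * b `^ (al - 1))) ^+ 2 -
   ((a * a `^ (al - 1)) ^+ 2 + m * (b * b `^ (al - 1)) ^+ 2)) =
   (a * a `^ (al - 1)) * (m * (b * b `^ (al - 1))) by rewrite Eq0; ring.
have E := @derive_E R _ _ _ _ _ a0 b0 b'0 m1 Eq0' hsum.
have Ep : a `^ al + (m - 1) * b `^ al = m * a `^ (al - 1) * b by rewrite hA hB.
have Bw := @k1_between R _ _ _ _ a0 ab al1 m1 Ep.
rewrite hA hB in Bw.
have [br1 br2] := @between_real R _ _ _ _ _ _ a0 b0 a'0 b'0 al1 m1 Eq0 E Bw.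
set mu := (- Dexp R (-1) _ _ _ _ _ _) in br1 br2.
set x : 'rV[R]_N := \row_j (if j == i0 then m else -1).
have tx : tangent x.
  rewrite /tangent (@sum_k1 i0 _ (-1)); first by rewrite /x mxE eqxx mulrN1 subrr.
  by move=> j ji; rewrite /x mxE (negbTE ji).
have xn0 : x != 0.
  apply/negP => /eqP x0; have := congr1 (fun M : 'rV[R]_N => M ord0 i0) x0.
  rewrite /x !mxE eqxx => m0; move: m1; rewrite m0; lra.
have Hn0 : Hfun al v != 0 by rewrite gt_eqF // (@Hpos R N al v vp Fv i0).
have dS : \sum_(j < N) dw v x j = dw v x i0 + m * (al * b `^ (al - 1) * -1).
  apply: sum_k1 => j ji; rewrite /dwf /x mxE (negbTE ji) (hb _ ji) //.
have Q : \sum_(j < N) v ord0 j `^ al * dw v x j =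
    a `^ al * dw v x i0 + m * (b `^ al * (al * b `^ (al - 1) * -1)).
  apply: sum_k1 => j ji; rewrite /dwf /x mxE (negbTE ji) (hb _ ji) //.
have dw0 : dw v x i0 = al * a `^ (al - 1) * m by rewrite /dwf /x mxE eqxx.
have key (i : 'I_N) : DFc R N al v x i = Dexp R (x ord0 i) (v ord0 i `^ al) (dw v x i)
   (\sum_(j < N) v ord0 j `^ al) (\sum_(j < N) dw v x j)
   (\sum_(j < N) v ord0 j `^ al * dw v x j) (Hfun al v).
  by rewrite DFcS /= (HfunS R N al v).
rewrite /lin_unstable; apply: (@eig_fin R N _ mu x (linear0 _) br2 tx xn0).
rewrite (@dF R N al v x vp Hn0); apply/rowP => i; rewrite !mxE key.
rewrite dS Q hS hH.
have [->|ii0] := eqVneq i i0.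
  rewrite /x mxE eqxx -/a dw0 hA hB.
  exact: br1.
have dwi : dw v x i = al * b `^ (al - 1) * -1.
  by rewrite /dwf /x mxE (negbTE ii0) (hb _ ii0).
rewrite /x mxE (negbTE ii0) -/x dwi (hb _ ii0) dw0 hA hB.
rewrite /mu; set D := Dexp _ _ _ _ _ _ _ _; by rewrite mulrN1 opprK.
Qed.
Lemma k1_E (i0 : 'I_N) (b : R) : (2 < N)%N ->
  \sum_(j < N) v ord0 j = 1 -> 0 < b ->
  (forall j, j != i0 -> v ord0 j = b) ->
  v ord0 i0 `^ al + (N%:R - 1 - 1) * b `^ al = (N%:R - 1) * v ord0 i0 `^ (al - 1) * b.
Proof.
move=> N2 s1 b0 hb.
set a := v ord0 i0.
set m : R := N%:R - 1.
have m1 : 1 < m by rewrite /m ltrBrDl (_ : 1 + 1 = 2%:R) // ltr_nat.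
have a0 : 0 < a := vp i0.
have b'0 : 0 < b `^ (al - 1) by apply: powR_gt0.
have hA : a `^ al = a * a `^ (al - 1) by apply: powRB1.
have hB : b `^ al = b * b `^ (al - 1) by apply: powRB1.
have hS : \sum_(j < N) v ord0 j `^ al = a `^ al + m * b `^ al.
  by apply: sum_k1 => j /hb ->.
have hS2 : \sum_(j < N) v ord0 j `^ al ^+ 2 = (a `^ al) ^+ 2 + m * (b `^ al) ^+ 2.
  by apply: sum_k1 => j /hb ->.
have hsum : a + m * b = 1 by rewrite -s1 (@sum_k1 i0 _ b).
have hH : Hfun al v = (a `^ al + m * b `^ al) ^+ 2 - ((a `^ al) ^+ 2 + m * (b `^ al) ^+ 2).
  by rewrite (HfunS R N al v) /= hS hS2.
have Eq0 : a * Hfun al v = a `^ al * (a `^ al + m * b `^ al - a `^ al).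
  by rewrite (@Fi R N al v vp Fv i0) /= hS.
rewrite hH hA hB in Eq0.
have Eq0' : a * ((a * a `^ (al - 1) + m * (b * b `^ (al - 1))) ^+ 2 -
   ((a * a `^ (al - 1)) ^+ 2 + m * (b * b `^ (al - 1)) ^+ 2)) =
   (a * a `^ (al - 1)) * (m * (b * b `^ (al - 1))) by rewrite Eq0; ring.
have E := @derive_E R _ _ _ _ _ a0 b0 b'0 m1 Eq0' hsum.
by rewrite hA hB.
Qed.

End P9.


Lemma entryE (R : realType) (N : nat) (v : 'rV[R]_N) (m : nat) (h : (m < N)%N) :
  entry v m = v ord0 (Ordinal h).
Proof.
by rewrite /entry (big_pred1 (Ordinal h)).
Qed.

Theorem lemma4p5 (R : realType) (N : nat) (alpha : R) (k : nat)
    (v : 'rV[R]_N) :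
  (3 <= N)%N -> 1 < alpha -> (1 <= k)%N -> (k.*2 <= N)%N ->
  E_k alpha k v ->
  ((k = 1%N -> (N%:R - 1) / (N%:R - 2) <= alpha ->
      tv v < 1 /\ lin_unstable alpha v) /\
   (alpha < (N%:R - 1) / (N%:R - 2) -> lin_unstable alpha v)).
Proof.
move=> N3 al1 k1 k2 [[[Dpos [Dsum _]] Fv] [vp [vnc [gA gB]]]].
rewrite -addnn in k2.
have N0 : (0 < N)%N by lia.
have kN : (k < N)%N by lia.
pose i0 := Ordinal N0. pose ik := Ordinal kN.
set a := v ord0 i0. set b := v ord0 ik.
have hA (j : 'I_N) : (j < k)%N -> v ord0 j = a by move=> jk; apply: gA => //=; lia.
have hB (j : 'I_N) : (k <= j)%N -> v ord0 j = b by move=> jk; apply: gB => //=.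
have a0 : 0 < a := vp i0.
have b0 : 0 < b := vp ik.
have ab : a != b.
  apply/negP => /eqP ab; apply: vnc.
  have allv j : v ord0 j = a.
    by case: (ltnP j k) => [/hA //| /hB ->]; rewrite ab.
  have Na : N%:R * a = 1.
    rewrite -[in RHS]Dsum (eq_bigr (fun _ => a)); last by move=> j _; rewrite allv.
    by rewrite sumr_const card_ord mulr_natl.
  have N0R : N%:R != 0 :> R by rewrite pnatr_eq0 -lt0n.
  apply/rowP => j; rewrite !mxE allv.
  by rewrite -(mulKf N0R a) Na mulr1.
have unst : lin_unstable alpha v.
  case: (ltngtP 1 k) => [k1'|k0|k1'].
  - have h1 : (1 < N)%N by lia.
    have hk1 : (k.+1 < N)%N by lia.
    pose i1 := Ordinal h1. pose ik1 := Ordinal hk1.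
    have a1 : v ord0 i1 = a by apply: hA.
    have b1 : v ord0 ik1 = b by apply: hB => /=; lia.
    case: (ltgtP a b) => [lab|lba|eab]; last by rewrite eab eqxx in ab.
    + apply: (@within_unstable R N alpha v vp Fv al1 i0 i1 ik) => //.
    + apply: (@within_unstable R N alpha v vp Fv al1 ik ik1 i0) => //.
      by apply/eqP => /(congr1 val) /=; lia.
  - lia.
  - subst k.
    have h1 : (1 < N)%N by lia.
    have h2 : (2 < N)%N by lia.
    pose i1 := Ordinal h1. pose i2 := Ordinal h2.
    have b1 : v ord0 i1 = b by apply: hB.
    have b2 : v ord0 i2 = b by apply: hB.
    have hb j : j != i0 -> v ord0 j = b.
      move=> ji; apply: hB; rewrite lt0n; apply: contra ji => /eqP j0.
      by apply/eqP/val_inj.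
    case: (ltgtP a b) => [lab|lba|eab]; last by rewrite eab eqxx in ab.
    + exact: (@between_unstable R N alpha v vp Fv al1 i0 b h2 Dsum hb lab).
    + apply: (@within_unstable R N alpha v vp Fv al1 i1 i2 i0) => //.
        by rewrite b1 b2.
      by rewrite b1.
split => //.
move=> ek thr; split => //; subst k.
have h2 : (2 < N)%N by lia.
have hb j : j != i0 -> v ord0 j = b.
  move=> ji; apply: hB; rewrite lt0n; apply: contra ji => /eqP j0.
  by apply/eqP/val_inj.
have E := @k1_E R N alpha v vp Fv i0 b h2 Dsum b0 hb.
have m1 : 1 < N%:R - 1 :> R by rewrite ltrBrDl (_ : 1 + 1 = 2%:R) // ltr_nat.
have hm : N%:R - 1 <= alpha * (N%:R - 1 - 1).
  have -> : N%:R - 1 - 1 = N%:R - 2 :> R by ring.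
  by rewrite -ler_pdivrMr // subr_gt0 ltr_nat.
have lba := @k1_tlt R a b alpha _ a0 b0 ab al1 m1 hm E.
have hN1 : (N.-1 < N)%N by lia.
rewrite /tv (@entryE R N v _ hN1) (@entryE R N v _ N0) -/a.
have -> : v ord0 (Ordinal hN1) = b by apply: hB => /=; lia.
by rewrite ltr_pdivrMr // mul1r.
Qed.
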